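(* Let $N_\mathrm{T},N_\mathrm{R},N_\mathrm{S},G,L$ be positive integers with $N_\mathrm{S}=GL$, let $N=\min(N_\mathrm{T},N_\mathrm{R})$, and let $\mathbf{H}_\mathrm{D}\in\mathbb{C}^{N_\mathrm{R}\times N_\mathrm{T}}$, $\mathbf{H}_\mathrm{B}\in\mathbb{C}^{N_\mathrm{R}\times N_\mathrm{S}}$, $\mathbf{H}_\mathrm{F}\in\mathbb{C}^{N_\mathrm{S}\times N_\mathrm{T}}$. Suppose $k=\min(\mathrm{rank}(\mathbf{H}_\mathrm{B}),\mathrm{rank}(\mathbf{H}_\mathrm{F}))$ satisfies $k\le N$. Define an auxiliary matrix $\mathbf{T}$ as any matrix satisfying $$\mathbf{T}\mathbf{T}^\mathsf{H}=\begin{cases}\mathbf{H}_\mathrm{D}(\mathbf{I}-\mathbf{V}_\mathrm{F}\mathbf{V}_\mathrm{F}^\mathsf{H})\mathbf{H}_\mathrm{D}^\mathsf{H}, & \text{if } \mathrm{rank}(\mathbf{H}_\mathrm{F})=k,\\ \mathbf{H}_\mathrm{D}^\mathsf{H}(\mathbf{I}-\mathbf{U}_\mathrm{B}\mathbf{U}_\mathrm{B}^\mathsf{H})\mathbf{H}_\mathrm{D}, & \text{if } \mathrm{rank}(\mathbf{H}_\mathrm{B})=k,\end{cases}$$ where $\mathbf{V}_\mathrm{F}\in\mathbb{C}^{N_\mathrm{T}\times k}$ has orthonormal columns that are right singular vectors of $\mathbf{H}_\mathrm{F}$ associated with its $k$ nonzero singular values, and $\mathbf{U}_\mathrm{B}\in\mathbb{C}^{N_\mathrm{R}\times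 k}$ has orthonormal columns that are left singular vectors of $\mathbf{H}_\mathrm{B}$ associated with its $k$ nonzero singular values. Then for every scattering matrix $\mathbf{\Theta}=\mathrm{diag}(\mathbf{\Theta}_1,\ldots,\mathbf{\Theta}_G)$ with $\mathbf{\Theta}_g\in\mathbb{U}^{L\times L}$ (in particular for D-RIS, $L=1$, and for BD-RIS of any group size), the equivalent channel $\mathbf{H}=\mathbf{H}_\mathrm{D}+\mathbf{H}_\mathrm{B}\mathbf{\Theta}\mathbf{H}_\mathrm{F}$ satisfies $$\sigma_n(\mathbf{H})\le\sigma_{n-k}(\mathbf{T})\ \text{ if } n>k,\qquad \sigma_n(\mathbf{H})\ge\sigma_n(\mathbf{T})\ \text{ if } n<N-k+1.$$
   Context: $\mathbb{U}^{L\times L}$ is the set of $L\times L$ complex unitary matrices; $\mathrm{diag}(\cdot)$ of matrices builds a block-diagonal matrix. $\sigma_n(\cdot)$ denotes the $n$-th largest singular value (singular values in non-increasing order, taken to be $0$ for indices beyond the smaller matrix dimension). *)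

(* Defs.v *)
(* complex numbers are R[i] for an arbitrary real closed
   field R (this includes the genuine complex numbers, R = the reals). *)
From HB Require Import structures.
From mathcomp Require Import all_boot all_order all_algebra.
From mathcomp Require Import complex.
Set Implicit Arguments. Unset Strict Implicit. Unset Printing Implicit Defensive.
Import Order.TTheory GRing.Theory Num.Theory.
Local Open Scope ring_scope.
Local Open Scope sesquilinear_scope.

Section Defs.
Variable R : rcfType.
Local Notation C := R[i].

Definition gram_eigs (m n : nat) (A : 'M[C]_(m, n)) : seq C :=
  sval (closed_field_poly_normal (char_poly (A ^t* *m A))).

(* Singular values of A in non-increasing order: square roots of the
   eigenvalues of A^H A (these eigenvalues are real and >= 0; we take their
   real part to land in R). There are n of them; the ones beyond min(m,n)
   are 0. *)
Definition sing_vals (m n : nat) (A : 'M[C]_(m, n)) : seq R :=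
  sort (>=%R) [seq Num.sqrt (@complex.Re R z) | z <- gram_eigs A].

(* sigma A i = sigma_i(A), the i-th largest singular value (1-based index),
   and 0 for indices beyond the number of columns. *)
Definition sigma (m n : nat) (A : 'M[C]_(m, n)) (i : nat) : R :=
  nth 0 (sing_vals A) i.-1.

Definition right_sing_vec (m n : nat) (A : 'M[C]_(m, n)) (v : 'cV[C]_n) (s : C) :=
  exists u : 'cV[C]_m, [/\ u ^t* *m u = 1%:M, A *m v = s *: u & A ^t* *m u = s *: v].

Definition left_sing_vec (m n : nat) (A : 'M[C]_(m, n)) (u : 'cV[C]_m) (s : C) :=
  exists v : 'cV[C]_n, [/\ v ^t* *m v = 1%:M, A *m v = s *: u & A ^t* *m u = s *: v].

Lemma sum_const_GL (G L : nat) : (\sum_(g < G) L)%N = (G * L)%N.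
Proof. by rewrite sum_nat_const card_ord. Qed.

Definition blkdiag (G L : nat) (B : 'I_G -> 'M[C]_L) : 'M[C]_(G * L) :=
  castmx (sum_const_GL G L, sum_const_GL G L) (@mxdiag C G (fun=> L) B).

End Defs.

(* Main.v *)
Require Import Defs.
From HB Require Import structures.
From mathcomp Require Import all_boot all_order all_algebra.
From mathcomp Require Import complex.
From mathcomp Require Import zify.
Set Implicit Arguments. Unset Strict Implicit. Unset Printing Implicit Defensive.
Import Order.TTheory GRing.Theory Num.Theory.
Local Open Scope ring_scope.
Local Open Scope sesquilinear_scope.

Lemma sylvester_char (F : fieldType) m n (a : 'M[F]_(m, n)) (b : 'M[F]_(n, m)) :
  'X^n * char_poly (a *m b) = 'X^m * char_poly (b *m a).
Proof.
rewrite /char_poly /char_poly_mx !map_mxM.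
set A := map_mx polyC a; set B := map_mx polyC b.
pose M1 := block_mx ('X%:M : 'M_m) A B (1%:M : 'M_n).
have E1 : \det M1 = \det ('X%:M - A *m B).
  have := det_mulmx (block_mx 1%:M (-A) 0 1%:M) M1.
  rewrite det_ublock !det1 !mul1r /M1 mulmx_block.
  rewrite !mul1mx !mul0mx !mulmx1 !add0r mulNmx subrr.
  by rewrite det_lblock det1 mulr1 => <-.
have E2 : 'X^n * \det M1 = 'X^m * \det ('X%:M - B *m A).
  have := det_mulmx (block_mx 1%:M 0 (-B) ('X%:M : 'M_n)) M1.
  rewrite det_lblock det1 mul1r det_scalar /M1 mulmx_block.
  rewrite !mul1mx !mul0mx !mulmx1 !addr0 !mulNmx mul_mx_scalar mul_scalar_mx addNr.
  rewrite det_ublock det_scalar addrC => <-.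
  by [].
by rewrite -E1 E2.
Qed.

Lemma card_count (T : finType) (p : pred T) : #|p| = count p (enum T).
Proof.
rewrite cardE /enum_mem size_filter count_filter; apply: eq_count => x /=.
by rewrite !inE andbT.
Qed.

Section Lam.
Variable R : rcfType.
Local Notation C := R[i].

Definition fR (z : C) : R := Num.sqrt (complex.Re z).
Definition eigs n (G : 'M[C]_n) := sval (closed_field_poly_normal (char_poly G)).
Definition lamseq n (G : 'M[C]_n) := sort (>=%R) [seq fR z | z <- eigs G].
Definition lam n (G : 'M[C]_n) j := nth 0 (lamseq G) j.-1.

Lemma sigmaE m n (A : 'M[C]_(m, n)) j : sigma A j = lam (A ^t* *m A) j.
Proof. by []. Qed.

Lemma char_eigs n (G : 'M[C]_n) : char_poly G = \prod_(z <- eigs G) ('X - z%:P).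
Proof.
rewrite /eigs; case: closed_field_poly_normal => r /= Hr.
by rewrite {1}Hr (monicP (char_poly_monic G)) scale1r.
Qed.

Lemma fR0 : fR 0 = 0.
Proof. by rewrite /fR sqrtr0. Qed.

Lemma fR_ge0 z : 0 <= fR z.
Proof. exact: sqrtr_ge0. Qed.

Local Notation geR := (>=%R : rel R).

Lemma geR_trans : transitive geR.
Proof. by move=> x y z /= h1 h2; exact: le_trans h2 h1. Qed.
Lemma geR_anti : antisymmetric geR.
Proof. by move=> x y /andP[/= h1 h2]; apply/eqP; rewrite eq_le h1 h2. Qed.
Lemma geR_total : total geR.
Proof. by move=> x y; exact: le_total. Qed.

Lemma sort_pad (s : seq R) a : all (fun x => 0 <= x) s ->
  sort geR (nseq a 0 ++ s) = sort geR s ++ nseq a 0.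
Proof.
move=> s0; apply: (sorted_eq geR_trans geR_anti).
- exact: (sort_sorted geR_total).
- rewrite sorted_pairwise; last exact: geR_trans.
  rewrite pairwise_cat; apply/and3P; split.
  + apply/allrelP => x y; rewrite mem_sort => xs /nseqP[-> _].
    by move/allP: s0 => /(_ x xs).
  + by rewrite -sorted_pairwise; [exact: (sort_sorted geR_total)|exact: geR_trans].
  + elim: a => //= a IH; rewrite IH andbT; apply/allP => y /nseqP[-> _] /=.
    by rewrite /geR /= lexx.
- by rewrite perm_sort perm_catC perm_cat2r perm_sym perm_sort.
Qed.

Lemma nth_pad (l : seq R) a j : nth 0 (l ++ nseq a 0) j = nth 0 l j.
Proof.
rewrite nth_cat; case: ltnP => // h.
by rewrite nth_nseq if_same nth_default.
Qed.

Lemma lam_perm n1 n2 (G1 : 'M[C]_n1) (G2 : 'M[C]_n2) a b :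
  perm_eq (nseq a 0 ++ eigs G1) (nseq b 0 ++ eigs G2) -> lam G1 =1 lam G2.
Proof.
move=> hp j; rewrite /lam /lamseq.
have all0 s : all (fun x => 0 <= x) [seq fR z | z <- s].
  by apply/allP => x /mapP[z _ ->]; exact: fR_ge0.
rewrite -(nth_pad _ a) -(nth_pad (sort _ [seq fR z | z <- eigs G2]) b).
rewrite -!sort_pad ?all0 //.
have -> : nseq a 0 ++ [seq fR z | z <- eigs G1] = map fR (nseq a 0 ++ eigs G1).
  by rewrite map_cat map_nseq fR0.
have -> : nseq b 0 ++ [seq fR z | z <- eigs G2] = map fR (nseq b 0 ++ eigs G2).
  by rewrite map_cat map_nseq fR0.
congr nth; apply/perm_sortP; [exact: geR_total|exact: geR_trans|exact: geR_anti|].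
exact: perm_map.
Qed.

Lemma prod_nseq0 a : \prod_(z <- nseq a (0 : C)) ('X - z%:P) = 'X^a.
Proof.
elim: a => [|a IH]; first by rewrite big_nil expr0.
by rewrite /= big_cons IH subr0 exprS.
Qed.

Lemma eigs_syl m n (a : 'M[C]_(m, n)) (b : 'M[C]_(n, m)) :
  perm_eq (nseq n 0 ++ eigs (a *m b)) (nseq m 0 ++ eigs (b *m a)).
Proof.
apply: prod_XsubC_eq; rewrite !big_cat /= !prod_nseq0 -!char_eigs.
exact: sylvester_char.
Qed.

Lemma lam_gram m n (A : 'M[C]_(m, n)) : lam (A ^t* *m A) =1 lam (A *m A ^t*).
Proof. exact: lam_perm (eigs_syl _ _). Qed.

Lemma eigs_mulC n (a b : 'M[C]_n) : perm_eq (eigs (a *m b)) (eigs (b *m a)).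
Proof. by rewrite -(perm_cat2l (nseq n 0)) eigs_syl. Qed.


Definition nrm n (r : 'rV[C]_n) := (r *m r ^t*) 0 0.
Definition frm n (G : 'M[C]_n) (r : 'rV[C]_n) := (r *m G *m r ^t*) 0 0.

Lemma nrm_sum n (r : 'rV[C]_n) : nrm r = \sum_j r 0 j * Num.conj (r 0 j).
Proof. by rewrite /nrm mxE; apply: eq_bigr => j _; rewrite !mxE. Qed.

Lemma nrm_ge0 n (r : 'rV[C]_n) : 0 <= nrm r.
Proof. by rewrite nrm_sum sumr_ge0 // => j _; exact: mul_conjC_ge0. Qed.

Lemma nrm_gt0 n (r : 'rV[C]_n) : r != 0 -> 0 < nrm r.
Proof. by move=> r0; rewrite /nrm -dotmxE; exact: dotmx_is_dotmx. Qed.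

Lemma frm_gram m n (A : 'M[C]_(m, n)) r : frm (A ^t* *m A) r = nrm (r *m A ^t*).
Proof.
rewrite /frm /nrm trmx_mul map_mxM trmxCK !mulmxA.
by [].
Qed.

Lemma frm_diag n (d : 'rV[C]_n) e :
  frm (diag_mx d) e = \sum_j d 0 j * (e 0 j * Num.conj (e 0 j)).
Proof.
rewrite /frm mul_mx_diag mxE; apply: eq_bigr => j _; rewrite !mxE.
by rewrite mulrCA mulrA.
Qed.


Lemma frm_spec n (M : 'M[C]_n) (d : 'rV[C]_n) e : M *m M ^t* = 1%:M ->
  frm (M ^t* *m diag_mx d *m M) (e *m M) = frm (diag_mx d) e.
Proof.
move=> MU; rewrite /frm trmx_mul map_mxM !mulmxA -(mulmxA e M) MU mulmx1.
by rewrite -(mulmxA _ M) MU mulmx1.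
Qed.

Lemma nrm_spec n (M : 'M[C]_n) e : M *m M ^t* = 1%:M -> nrm (e *m M) = nrm e.
Proof.
by move=> MU; rewrite /nrm trmx_mul map_mxM !mulmxA -(mulmxA e M) MU mulmx1.
Qed.

Lemma gram_spec m n (A : 'M[C]_(m, n)) :
  exists M : 'M[C]_n, exists d : 'rV[C]_n,
  [/\ M *m M ^t* = 1%:M, A ^t* *m A = M ^t* *m diag_mx d *m M,
      (forall j, 0 <= d 0 j) & perm_eq (eigs (A ^t* *m A)) [seq d 0 i | i <- enum 'I_n]].
Proof.
set G := A ^t* *m A.
have Gh : G ^t* = G by rewrite /G trmx_mul map_mxM trmxCK.
have Gn : G \is normalmx by apply/normalmxP; rewrite Gh.
have /orthomx_spectralP HG := Gn.
have MUu := spectral_unitarymx G.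
have MU := unitarymxP MUu.
set M := spectralmx G in HG MUu MU; set d := spectral_diag G in HG.
rewrite invmx_unitary // in HG.
exists M, d; split => //.
- move=> j; have := frm_spec d (delta_mx 0 j) MU; rewrite -HG frm_gram frm_diag.
  rewrite (bigD1 j) //= big1 => [|i ij]; last by rewrite !mxE (negbTE ij) /= mul0r mulr0.
  rewrite !mxE !eqxx /= addr0 mulr1n rmorph1 !mulr1 => <-; exact: nrm_ge0.
- have h1 : perm_eq (eigs G) (eigs (diag_mx d)).
    by rewrite HG; apply: (perm_trans (eigs_mulC _ _)); rewrite mulmxA MU mul1mx.
  apply: (perm_trans h1).
  apply: prod_XsubC_eq; rewrite -char_eigs char_poly_trig ?diag_mx_is_trig //.
  rewrite big_map big_enum /=; apply: eq_big => // i; rewrite !mxE eqxx //.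
Qed.

Lemma spec_sub n (M : 'M[C]_n) (d : 'rV[C]_n) (S : pred 'I_n) : M *m M ^t* = 1%:M ->
  exists W : 'M[C]_(#|S|, n), (#|S| <= \rank W)%N /\
  forall r, (r <= W)%MS -> exists e : 'rV[C]_n,
   [/\ frm (M ^t* *m diag_mx d *m M) r = frm (diag_mx d) e, nrm r = nrm e &
       forall j, ~~ S j -> e 0 j = 0].
Proof.
move=> MU.
pose f := fun a : 'I_#|S| => (enum_val a : 'I_n).
pose E := rowsub f (1%:M : 'M[C]_n).
have EE : E *m E^T = 1%:M.
  rewrite /E mul_rowsub_mx mul1mx; apply/matrixP => a b; rewrite !mxE /f.
  by rewrite (inj_eq enum_val_inj) eq_sym.
have Mu : M \in unitmx by case: (mulmx1_unit MU).
exists (E *m M); split.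
  rewrite mxrankMfree ?row_free_unit //.
  by rewrite -[X in (X <= _)%N](mxrank1 C) -EE mxrankM_maxl.
move=> r /submxP[c ->]; exists (c *m E); split.
- by rewrite mulmxA frm_spec.
- by rewrite mulmxA nrm_spec.
- move=> j Sj; rewrite mxE big1 // => a _; rewrite /E !mxE.
  have : f a \in S by exact: enum_valP.
  case: eqP => [faj fa|_ _]; last by rewrite mulr0n mulr0.
  by move: fa; rewrite unfold_in faj (negbTE Sj).
Qed.

Lemma frm_diag_ge n (d e : 'rV[C]_n) (S : pred 'I_n) x :
  (forall j, S j -> x <= d 0 j) -> (forall j, ~~ S j -> e 0 j = 0) ->
  x * nrm e <= frm (diag_mx d) e.
Proof.
move=> hd he; rewrite frm_diag nrm_sum mulr_sumr; apply: ler_sum => j _.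
case: (boolP (S j)) => Sj; first by rewrite ler_wpM2r ?mul_conjC_ge0 ?hd.
by rewrite he // mul0r !mulr0.
Qed.

Lemma frm_diag_le n (d e : 'rV[C]_n) (S : pred 'I_n) x :
  (forall j, S j -> d 0 j <= x) -> (forall j, ~~ S j -> e 0 j = 0) ->
  frm (diag_mx d) e <= x * nrm e.
Proof.
move=> hd he; rewrite frm_diag nrm_sum mulr_sumr; apply: ler_sum => j _.
case: (boolP (S j)) => Sj; first by rewrite ler_wpM2r ?mul_conjC_ge0 ?hd.
by rewrite he // mul0r !mulr0.
Qed.

Lemma count_sorted_ge (l : seq R) j : sorted geR l -> (j < size l)%N ->
  (j < count (fun z => (nth 0 l j <= z)%R) l)%N.
Proof.
move=> sl jl; set y := nth 0 l j; rewrite -(cat_take_drop j.+1 l) count_cat.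
suff -> : count (fun z => y <= z) (take j.+1 l) = j.+1 by rewrite leq_addr.
have st : size (take j.+1 l) = j.+1 by rewrite size_takel.
rewrite -{2}st; apply/eqP; rewrite -all_count; apply/(all_nthP 0) => i il.
rewrite nth_take; last by rewrite -st.
rewrite /y.
have := sorted_leq_nth geR_trans (fun x : R => lexx x) 0 sl.
move=> /(_ i j); apply => //.
- by rewrite inE (leq_trans il) // st.
- by rewrite -ltnS -st.
Qed.

Lemma count_sorted_le (l : seq R) j : sorted geR l -> (j < size l)%N ->
  (size l - j <= count (fun z => (z <= nth 0 l j)%R) l)%N.
Proof.
move=> sl jl; set y := nth 0 l j; rewrite -[X in count _ X](cat_take_drop j l) count_cat.
suff -> : count (fun z => z <= y) (drop j l) = (size l - j)%N by rewrite leq_addl.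
have st : size (drop j l) = (size l - j)%N by rewrite size_drop.
rewrite -[X in _ = X]st; apply/eqP; rewrite -all_count; apply/(all_nthP 0) => i il.
rewrite nth_drop /y.
have := sorted_leq_nth geR_trans (fun x : R => lexx x) 0 sl.
move=> /(_ j (j + i)%N); apply => //.
- by rewrite inE -ltn_subRL -st.
- by rewrite leq_addr.
Qed.

Lemma fR_le (z : C) (y : R) : 0 <= z -> 0 <= y -> y <= fR z -> (y ^+ 2)%:C%C <= z.
Proof.
case: z => a b; rewrite lecE /= => /andP[/eqP b0 a0] y0 hy.
rewrite b0 eqxx /=.
by have := ler_pM y0 y0 hy hy; rewrite -!expr2 /fR /= sqr_sqrtr.
Qed.

Lemma fR_ge (z : C) (y : R) : 0 <= z -> fR z <= y -> z <= (y ^+ 2)%:C%C.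
Proof.
case: z => a b; rewrite lecE /= => /andP[/eqP b0 a0] hy.
rewrite b0 eqxx /=.
by have := ler_pM (fR_ge0 _) (fR_ge0 _) hy hy; rewrite -!expr2 /fR /= sqr_sqrtr.
Qed.

Lemma lamseq_ge0 n (G : 'M[C]_n) y : y \in lamseq G -> 0 <= y.
Proof. by rewrite mem_sort => /mapP[z _ ->]; exact: fR_ge0. Qed.

Lemma lamseq_sorted n (G : 'M[C]_n) : sorted geR (lamseq G).
Proof. exact: (sort_sorted geR_total). Qed.

Lemma count_lamseq m n (A : 'M[C]_(m, n)) (d : 'rV[C]_n) (p : pred R) :
  perm_eq (eigs (A ^t* *m A)) [seq d 0 i | i <- enum 'I_n] ->
  count p (lamseq (A ^t* *m A)) = #|[pred i | p (fR (d 0 i))]|.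
Proof.
move=> hp; rewrite /lamseq (permP (permEl (perm_sort _ _))) (permP (perm_map fR hp)).
by rewrite -map_comp count_map card_count.
Qed.

Lemma size_lamseq m n (A : 'M[C]_(m, n)) : size (lamseq (A ^t* *m A)) = n.
Proof.
have [M [d [_ _ _ hp]]] := gram_spec A.
by rewrite size_sort size_map (perm_size hp) size_map size_enum_ord.
Qed.

Lemma CF1 m n (A : 'M[C]_(m, n)) j : (j < n)%N ->
  exists k, exists W : 'M[C]_(k, n), (j < \rank W)%N /\
  forall r, (r <= W)%MS ->
    ((nth 0 (lamseq (A ^t* *m A)) j) ^+ 2)%:C%C * nrm r <= frm (A ^t* *m A) r.
Proof.
move=> jn; have [M [d [MU HG d0 hp]]] := gram_spec A.
set y := nth 0 _ j.
have sz := size_lamseq A.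
have y0 : 0 <= y by apply: lamseq_ge0 (mem_nth _ _); rewrite sz.
pose S := [pred i | y <= fR (d 0 i)].
have [W [rW HW]] := spec_sub d S MU.
exists #|S|, W; split.
  apply: leq_trans rW; rewrite -(count_lamseq (fun z => y <= z) hp).
  by apply: count_sorted_ge; rewrite ?lamseq_sorted ?sz.
move=> r /HW[e [fe ne ze]]; rewrite HG fe ne.
by apply: (frm_diag_ge (S := S)) => // i Si; apply: fR_le.
Qed.

Lemma CF2 m n (A : 'M[C]_(m, n)) j : (j < n)%N ->
  exists k, exists W : 'M[C]_(k, n), (n - j <= \rank W)%N /\
  forall r, (r <= W)%MS ->
    frm (A ^t* *m A) r <= ((nth 0 (lamseq (A ^t* *m A)) j) ^+ 2)%:C%C * nrm r.
Proof.
move=> jn; have [M [d [MU HG d0 hp]]] := gram_spec A.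
set y := nth 0 _ j.
have sz := size_lamseq A.
pose S := [pred i | fR (d 0 i) <= y].
have [W [rW HW]] := spec_sub d S MU.
exists #|S|, W; split.
  apply: leq_trans rW; rewrite -(count_lamseq (fun z => z <= y) hp).
  rewrite -{1}sz; apply: count_sorted_le; rewrite ?lamseq_sorted ?sz //.
move=> r /HW[e [fe ne ze]]; rewrite HG fe ne.
by apply: (frm_diag_le (S := S)) => // i Si; apply: fR_ge.
Qed.

Lemma nz_row n m (X : 'M[C]_(m, n)) : (0 < \rank X)%N ->
  exists r : 'rV[C]_n, r != 0 /\ (r <= X)%MS.
Proof.
move=> rX; case/boolP: [exists i, row i X != 0] => [/existsP[i ri]|/existsPn h].
  by exists (row i X); split => //; exact: row_sub.
suff X0 : X = 0 by move: rX; rewrite X0 mxrank0.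
by apply/row_matrixP => i; rewrite row0; apply/eqP; have := h i; rewrite negbK.
Qed.

Lemma rank_cap_ge n m1 m2 (A : 'M[C]_(m1, n)) (B : 'M[C]_(m2, n)) :
  (\rank A + \rank B - n <= \rank (A :&: B))%N.
Proof.
have h := mxrank_sum_cap A B; have h2 := rank_leq_col (A + B)%MS; lia.
Qed.

Lemma cap_nz n m1 m2 (A : 'M[C]_(m1, n)) (B : 'M[C]_(m2, n)) :
  (n < \rank A + \rank B)%N ->
  exists r : 'rV[C]_n, [/\ r != 0, (r <= A)%MS & (r <= B)%MS].
Proof.
move=> h; have h2 := rank_cap_ge A B.
have [|r [r0 rX]] := @nz_row n n (A :&: B)%MS; first lia.
exists r; split => //; apply: submx_trans rX _; [exact: capmxSl|exact: capmxSr].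
Qed.

Lemma proj_id n k (V : 'M[C]_(n, k)) : V ^t* *m V = 1%:M ->
  let P := 1%:M - V *m V ^t* in
  [/\ P ^t* = P, P *m P ^t* + V *m V ^t* = 1%:M & V ^t* *m P = 0].
Proof.
move=> VV P.
have QH : (V *m V ^t*) ^t* = V *m V ^t* by rewrite trmx_mul map_mxM trmxCK.
have PH : P ^t* = P by rewrite /P linearB /= map_mxB /= trmx1 map_mx1 QH.
have QQ : V *m V ^t* *m (V *m V ^t*) = V *m V ^t*.
  by rewrite mulmxA -(mulmxA V) VV mulmx1.
split => //.
  by rewrite PH /P mulmxBl mulmxBr !mul1mx mulmxBr mulmx1 QQ subrr subr0 subrK.
by rewrite /P mulmxBr mulmx1 mulmxA VV mul1mx subrr.
Qed.

Lemma nrm_split n k (V : 'M[C]_(n, k)) (r : 'rV[C]_n) : V ^t* *m V = 1%:M ->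
  nrm r = nrm (r *m (1%:M - V *m V ^t*)) + nrm (r *m V).
Proof.
move=> VV; have [PH PP _] := proj_id VV.
rewrite /nrm.
set P := 1%:M - V *m V ^t*.
have -> : r *m r ^t* = r *m P *m (r *m P) ^t* + r *m V *m (r *m V) ^t*.
  rewrite !trmx_mul !map_mxM !mulmxA -mulmxDl -!(mulmxA r) -mulmxDr PP.
  by rewrite mulmx1.
by rewrite mxE.
Qed.

Lemma nrm_proj n k (V : 'M[C]_(n, k)) (r : 'rV[C]_n) : V ^t* *m V = 1%:M ->
  nrm (r *m (1%:M - V *m V ^t*)) <= nrm r.
Proof. by move=> VV; rewrite (nrm_split r VV) lerDl nrm_ge0. Qed.

Lemma frm_proj m n k (A : 'M[C]_(m, n)) (V : 'M[C]_(n, k)) r : V ^t* *m V = 1%:M ->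
  let P := 1%:M - V *m V ^t* in
  frm ((A *m P) ^t* *m (A *m P)) r = frm (A ^t* *m A) (r *m P).
Proof.
move=> VV P; have [PH _ _] := proj_id VV.
by rewrite !frm_gram trmx_mul map_mxM PH mulmxA.
Qed.

Lemma frm0 n (G : 'M[C]_n) : frm G 0 = 0.
Proof. by rewrite /frm !mul0mx mxE. Qed.

Lemma lam_ge0 n (G : 'M[C]_n) j : 0 <= lam G j.
Proof.
rewrite /lam; case: (ltnP j.-1 (size (lamseq G))) => h.
  by apply: lamseq_ge0; exact: mem_nth.
by rewrite nth_default.
Qed.

Lemma sq_le (x y : R) : 0 <= x -> 0 <= y -> (x ^+ 2)%:C%C <= (y ^+ 2)%:C%C -> x <= y.
Proof.
move=> x0 y0; rewrite lecR ler_pXn2r // ?nnegrE //.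
Qed.

Lemma scale_cancel (x y : R) (a b : C) : 0 < a -> b <= a ->
  (x ^+ 2)%:C%C * a <= (y ^+ 2)%:C%C * b -> (x ^+ 2)%:C%C <= (y ^+ 2)%:C%C.
Proof.
move=> a0 ba h.
have y2 : 0 <= (y ^+ 2)%:C%C by rewrite lecR sqr_ge0.
have := le_trans h (ler_wpM2l y2 ba).
by rewrite ler_pM2r.
Qed.

End Lam.


Section Lam2.
Variable R : rcfType.
Local Notation C := R[i].
Local Notation geR := (>=%R : rel R).
Local Opaque eigs.
Lemma lam_out m n (A : 'M[C]_(m, n)) j : (n <= j.-1)%N -> lam (A ^t* *m A) j = 0.
Proof. by move=> h; rewrite /lam nth_default // size_lamseq. Qed.

Lemma lamseq_nth_ge0 m n (A : 'M[C]_(m, n)) i : 0 <= nth 0 (lamseq (A ^t* *m A)) i.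
Proof.
case: (ltnP i n) => h; last by rewrite nth_default // size_lamseq.
by apply: lamseq_ge0; apply: mem_nth; rewrite size_lamseq.
Qed.

Lemma xp_lem (x : R) : 0 <= x -> x != 0 -> 0 < (x ^+ 2)%:C%C.
Proof. by move=> x0 xn0; rewrite ltcR exprn_gt0 // lt0r xn0 x0. Qed.

Lemma core_a n k1 k2 (G Gp P : 'M[C]_n) (W : 'M[C]_(k1, n)) (W2 : 'M[C]_(k2, n))
  (x y : R) j :
  (forall r, frm Gp r = frm G (r *m P)) -> (forall r, nrm (r *m P) <= nrm r) ->
  0 <= x -> 0 <= y -> (j < \rank W)%N -> (n - j <= \rank W2)%N ->
  (forall r, (r <= W)%MS -> (x ^+ 2)%:C%C * nrm r <= frm Gp r) ->
  (forall r, (r <= W2)%MS -> frm G r <= (y ^+ 2)%:C%C * nrm r) -> x <= y.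
Proof.
move=> hf hn x0 y0 rW rW2 HW HW2.
have [->|xn0] := eqVneq x 0; first by [].
have xp := xp_lem x0 xn0.
have rWP : \rank (W *m P) = \rank W.
  have := mxrank_mul_ker W P.
  suff -> : \rank (W :&: kermx P)%MS = 0%N by rewrite addn0.
  apply/eqP; apply: contraT; rewrite -lt0n => /nz_row[r [r0 rX]].
  have rW' : (r <= W)%MS by apply: submx_trans rX (capmxSl _ _).
  have /sub_kermxP rP0 : (r <= kermx P)%MS by apply: submx_trans rX (capmxSr _ _).
  have := HW r rW'; rewrite hf rP0 frm0.
  by move=> h; have := lt_le_trans (mulr_gt0 xp (nrm_gt0 r0)) h; rewrite ltxx.
have [|s [s0 sW sW2]] := cap_nz (A := W *m P) (B := W2); first lia.
have [c sE] := submxP sW.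
have rW' : (c *m W <= W)%MS by exact: submxMl.
have sr : s = c *m W *m P by rewrite sE mulmxA.
have h1 := HW _ rW'; rewrite hf -sr in h1.
have h2 := HW2 s sW2.
have h3 : nrm s <= nrm (c *m W) by rewrite sr; exact: hn.
apply: sq_le => //; apply: (scale_cancel (a := nrm s) (b := nrm s)) => //.
  exact: nrm_gt0.
apply: le_trans h2; apply: le_trans h1.
by rewrite ler_wpM2l // ltW.
Qed.

Lemma core_b n k k1 k2 (G Gp : 'M[C]_n) (V : 'M[C]_(n, k))
  (W1 : 'M[C]_(k1, n)) (W2 : 'M[C]_(k2, n)) (x y : R) j :
  (forall r, r *m V = 0 -> frm Gp r = frm G r) ->
  0 <= x -> 0 <= y -> (k <= j < n)%N -> (j < \rank W1)%N -> (n - (j - k) <= \rank W2)%N ->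
  (forall r, (r <= W1)%MS -> (y ^+ 2)%:C%C * nrm r <= frm G r) ->
  (forall r, (r <= W2)%MS -> frm Gp r <= (x ^+ 2)%:C%C * nrm r) -> y <= x.
Proof.
move=> hf x0 y0 /andP[kj jn] rW1 rW2 HW1 HW2.
have rK : (n - k <= \rank (kermx V))%N.
  by rewrite mxrank_ker; have := rank_leq_col V; lia.
have h12 := rank_cap_ge W1 W2.
have [|r [r0 r12 rK']] := cap_nz (A := (W1 :&: W2)%MS) (B := kermx V); first lia.
have rW1' : (r <= W1)%MS by apply: submx_trans r12 (capmxSl _ _).
have rW2' : (r <= W2)%MS by apply: submx_trans r12 (capmxSr _ _).
have rV : r *m V = 0 by apply/sub_kermxP.
have h1 := HW1 r rW1'; have h2 := HW2 r rW2'.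
rewrite hf // in h2.
apply: sq_le => //; apply: (scale_cancel (a := nrm r) (b := nrm r)) => //.
  exact: nrm_gt0.
exact: le_trans h1 h2.
Qed.

Lemma cmp_a m n k (A : 'M[C]_(m, n)) (V : 'M[C]_(n, k)) : V ^t* *m V = 1%:M ->
  let P := 1%:M - V *m V ^t* in
  forall j, lam ((A *m P) ^t* *m (A *m P)) j <= lam (A ^t* *m A) j.
Proof.
move=> VV P j.
case: (ltnP j.-1 n) => jn; last by rewrite !lam_out.
have [k1 [W [rW HW]]] := CF1 (A *m P) jn.
have [k2 [W2 [rW2 HW2]]] := CF2 A jn.
have x0 := lamseq_nth_ge0 (A *m P) j.-1.
have y0 := lamseq_nth_ge0 A j.-1.
rewrite /lam; apply: (core_a (P := P) _ _ x0 y0 rW rW2 HW HW2).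
  by move=> r; rewrite (frm_proj _ _ VV).
by move=> r; exact: nrm_proj.
Qed.

Lemma cmp_b m n k (A : 'M[C]_(m, n)) (V : 'M[C]_(n, k)) : V ^t* *m V = 1%:M ->
  let P := 1%:M - V *m V ^t* in
  forall j, (k < j)%N -> lam (A ^t* *m A) j <= lam ((A *m P) ^t* *m (A *m P)) (j - k).
Proof.
move=> VV P j kj.
case: (ltnP j.-1 n) => jn; last by rewrite (lam_out A) // lam_ge0.
have jkn : ((j - k).-1 < n)%N by lia.
have [k1 [W1 [rW1 HW1]]] := CF1 A jn.
have [k2 [W2 [rW2 HW2]]] := CF2 (A *m P) jkn.
have x0 := lamseq_nth_ge0 (A *m P) (j - k).-1.
have y0 := lamseq_nth_ge0 A j.-1.
have e : (j - k).-1 = (j.-1 - k)%N by lia.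
rewrite e in HW2 rW2 x0 *.
have kjn : (k <= j.-1 < n)%N by rewrite jn andbT; lia.
rewrite /lam e; apply: (core_b (V := V) _ x0 y0 kjn rW1 rW2 HW1 HW2).
move=> r rV; rewrite (frm_proj _ _ VV) /P mulmxBr mulmx1 mulmxA rV mul0mx subr0.
by [].
Qed.

End Lam2.


Section Main.
Variable R : rcfType.
Local Notation C := R[i].
Local Opaque eigs.

Lemma row_tc n k (V : 'M[C]_(n, k)) j : row j (V ^t*) = (col j V) ^t*.
Proof. by apply/matrixP => a b; rewrite !mxE. Qed.

Lemma tcZ m n (a : C) (M : 'M[C]_(m, n)) : (a *: M) ^t* = Num.conj a *: M ^t*.
Proof. by apply/matrixP => i j; rewrite !mxE rmorphM. Qed.

Lemma span_lemma n p k (X : 'M[C]_(p, n)) (V : 'M[C]_(n, k)) :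
  V ^t* *m V = 1%:M -> \rank X = k ->
  (forall j, exists2 a : C, a != 0 & exists w : 'rV[C]_p, (col j V) ^t* = a *: (w *m X)) ->
  exists Y : 'M[C]_(p, k), X = Y *m V ^t*.
Proof.
move=> VV rX hj.
have sub : (V ^t* <= X)%MS.
  apply/row_subP => j; rewrite row_tc; have [a _ [w ->]] := hj j.
  by apply: scalemx_sub; exact: submxMl.
have rV : \rank (V ^t*) = k.
  apply/eqP; rewrite eqn_leq rank_leq_row /=.
  by rewrite -{1}(mxrank1 C k) -VV mxrankM_maxl.
have := mxrank_leqif_eq sub; rewrite rV rX => /leqifP; rewrite eqxx.
case: ifP => [/andP[_ /submxP[Y ->]] _|_]; first by exists Y.
by rewrite ltnn.
Qed.

End Main.

Unset Implicit Arguments.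
Set Strict Implicit.

Theorem proposition2 (R : rcfType) (NT NR G L : nat)
  (HD : 'M[R[i]]_(NR, NT)) (HB : 'M[R[i]]_(NR, G * L)) (HF : 'M[R[i]]_(G * L, NT))
  (k : nat) :
  (0 < NT)%N -> (0 < NR)%N -> (0 < G)%N -> (0 < L)%N ->
  k = minn (\rank HB) (\rank HF) ->
  (k <= minn NT NR)%N ->
  forall (Theta_ : 'I_G -> 'M[R[i]]_L),
  (forall g, Theta_ g \is unitarymx) ->
  let H := HD + HB *m blkdiag Theta_ *m HF in
  let N := minn NT NR in
  (* case rank(HF) = k *)
  (\rank HF = k ->
   forall VF : 'M[R[i]]_(NT, k),
   VF ^t* *m VF = 1%:M ->
   (forall j, exists2 s : R[i], 0 < s & right_sing_vec HF (col j VF) s) ->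
   forall (m : nat) (T : 'M[R[i]]_(NR, m)),
   T *m T ^t* = HD *m (1%:M - VF *m VF ^t*) *m HD ^t* ->
   (forall n, (k < n)%N -> sigma H n <= sigma T (n - k)) /\
   (forall n, (0 < n)%N -> (n < N - k + 1)%N -> sigma T n <= sigma H n)) /\
  (* case rank(HB) = k *)
  (\rank HB = k ->
   forall UB : 'M[R[i]]_(NR, k),
   UB ^t* *m UB = 1%:M ->
   (forall j, exists2 s : R[i], 0 < s & left_sing_vec HB (col j UB) s) ->
   forall (m : nat) (T : 'M[R[i]]_(NT, m)),
   T *m T ^t* = HD ^t* *m (1%:M - UB *m UB ^t*) *m HD ->
   (forall n, (k < n)%N -> sigma H n <= sigma T (n - k)) /\
   (forall n, (0 < n)%N -> (n < N - k + 1)%N -> sigma T n <= sigma H n)).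
Proof.
move=> _ _ _ _ _ _ Theta _ H N; split.
- move=> rF VF VV hs m T hT.
  set P := 1%:M - VF *m VF ^t*.
  have [PH PP VP] := proj_id VV.
  have [Y HFE] : exists Y, HF = Y *m VF ^t*.
    apply: span_lemma VV rF _ => j.
    have [s s0 [u [uu Hv Hu]]] := hs j.
    have sn0 : s != 0 := lt0r_neq0 s0.
    exists (Num.conj s^-1); first by rewrite conjC_eq0 invr_eq0.
    exists (u ^t*).
    have -> : col j VF = s^-1 *: (HF ^t* *m u) by rewrite Hu scalerA mulVf // scale1r.
    by rewrite tcZ trmx_mul map_mxM trmxCK.
  have HFP : HF *m P = 0 by rewrite HFE -mulmxA VP mulmx0.
  have HP : H *m P = HD *m P by rewrite /H mulmxDl -mulmxA HFP mulmx0 addr0.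
  have PP' : P *m P ^t* = P by apply/(addIr (VF *m VF ^t*)); rewrite PP /P subrK.
  have TT : T *m T ^t* = (H *m P) *m (H *m P) ^t*.
    by rewrite hT HP trmx_mul map_mxM !mulmxA -(mulmxA HD P) PP'.
  have sT j : sigma T j = lam ((H *m P) ^t* *m (H *m P)) j.
    by rewrite sigmaE lam_gram TT -lam_gram.
  split.
  + by move=> n kn; rewrite sT sigmaE; exact: cmp_b.
  + by move=> n _ _; rewrite sT sigmaE; exact: cmp_a.
- move=> rB UB UU hs m T hT.
  set Q := 1%:M - UB *m UB ^t*.
  have [QH QQ' UQ] := proj_id UU.
  have [Y HBE] : exists Y, HB ^t* = Y *m UB ^t*.
    apply: span_lemma UU _ _; first by rewrite mxrank_map mxrank_tr.
    move=> j; have [s s0 [v [vv Hv Hu]]] := hs j.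
    have sn0 : s != 0 := lt0r_neq0 s0.
    exists (Num.conj s^-1); first by rewrite conjC_eq0 invr_eq0.
    exists (v ^t*).
    have -> : col j UB = s^-1 *: (HB *m v) by rewrite Hv scalerA mulVf // scale1r.
    by rewrite tcZ trmx_mul map_mxM.
  have QHB : Q *m HB = 0.
    have -> : HB = UB *m Y ^t* by rewrite -[HB]trmxCK HBE trmx_mul map_mxM trmxCK.
    by rewrite mulmxA /Q mulmxBl mul1mx -mulmxA UU mulmx1 subrr mul0mx.
  have QH' : Q *m H = Q *m HD by rewrite /H mulmxDr !mulmxA QHB !mul0mx addr0.
  have QQ : Q *m Q = Q.
    move: QQ'; rewrite QH => QQ''.
    by apply/(addIr (UB *m UB ^t*)); rewrite QQ'' /Q subrK.
  have HtQ : H ^t* *m Q = HD ^t* *m Q.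
    by have := congr1 (fun X => X ^t*) QH'; rewrite /= !trmx_mul !map_mxM QH.
  set A := H ^t*.
  have AQ : (A *m Q) *m (A *m Q) ^t* = T *m T ^t*.
    rewrite hT trmx_mul map_mxM QH /A trmxCK HtQ QH'.
    by rewrite mulmxA -(mulmxA _ Q Q) QQ.
  have sT j : sigma T j = lam ((A *m Q) ^t* *m (A *m Q)) j.
    by rewrite sigmaE lam_gram -AQ -lam_gram.
  have sH j : sigma H j = lam (A ^t* *m A) j.
    by rewrite sigmaE lam_gram /A trmxCK.
  split.
  + by move=> n kn; rewrite sT sH; exact: cmp_b.
  + by move=> n _ _; rewrite sT sH; exact: cmp_a.
Qed.
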